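(* Consider a complete 4-node network with nodes $A,B,C,D$, where for each ordered pair of distinct nodes $(X,Y)$ the directed link $XY$ has capacity $XY>0$. Define \[ I^*=\min\{BA+CA,BA+DA,CA+DA,AB+CB,AB+DB,CB+DB,AC+BC,AC+DC,BC+DC,AD+BD,AD+CD,BD+CD\}, \] and for distinct nodes $X,Y$ write $\widehat{XY}=XY+YX$. Then for any positive value $R<I^*$, there is a set of three distinct nodes $\{X,Y,Z\}$ such that $\widehat{XY}>R$ and $\widehat{XZ}>R$.
   Context: Here $XY$ denotes the capacity (maximum number of bits per unit time) of the directed link from node $X$ to node $Y$. *)

(* Defs.v *)
From Stdlib Require Import Reals.
Open Scope R_scope.

Inductive node := A | B | C | D.

(* c X Y is the capacity XY of the directed link X -> Y. *)
Definition Istar (c : node -> node -> R) : R :=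
  Rmin (c B A + c C A) (Rmin (c B A + c D A) (Rmin (c C A + c D A)
  (Rmin (c A B + c C B) (Rmin (c A B + c D B) (Rmin (c C B + c D B)
  (Rmin (c A C + c B C) (Rmin (c A C + c D C) (Rmin (c B C + c D C)
  (Rmin (c A D + c B D) (Rmin (c A D + c C D) (c B D + c C D))))))))))).

Definition hat (c : node -> node -> R) (X Y : node) : R := c X Y + c Y X.

(* Main.v *)
Require Import Defs.
From Stdlib Require Import Reals Lra.
Open Scope R_scope.

Theorem corollary1 (c : node -> node -> R)
  (hpos : forall X Y : node, X <> Y -> 0 < c X Y)
  (R0 : R) (hR0 : 0 < R0) (hR : R0 < Istar c) :
  exists X Y Z : node, X <> Y /\ X <> Z /\ Y <> Z /\
    hat c X Y > R0 /\ hat c X Z > R0.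
Proof.
  unfold Istar in hR.
  repeat match type of hR with
  | _ < Rmin ?a ?b => let H := fresh "H" in
      assert (H : R0 < a) by (eapply Rlt_le_trans; [exact hR| apply Rmin_l]);
      apply (fun h => Rlt_le_trans _ _ _ h (Rmin_r a b)) in hR
  end.
  unfold hat.
  destruct (Rlt_le_dec R0 (c A B + c B A)) as [ab|ab];
  destruct (Rlt_le_dec R0 (c A Defs.C + c Defs.C A)) as [ac|ac];
  destruct (Rlt_le_dec R0 (c A D + c D A)) as [ad|ad];
  destruct (Rlt_le_dec R0 (c B Defs.C + c Defs.C B)) as [bc|bc];
  destruct (Rlt_le_dec R0 (c B D + c D B)) as [bd|bd];
  destruct (Rlt_le_dec R0 (c Defs.C D + c D Defs.C)) as [cd|cd];
  first
  [ exists A, B, Defs.C; split; [discriminate|split;[discriminate|split;[discriminate|unfold hat; split;lra]]]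
  | exists A, B, D; split; [discriminate|split;[discriminate|split;[discriminate|unfold hat; split;lra]]]
  | exists A, Defs.C, D; split; [discriminate|split;[discriminate|split;[discriminate|unfold hat; split;lra]]]
  | exists B, A, Defs.C; split; [discriminate|split;[discriminate|split;[discriminate|unfold hat; split;lra]]]
  | exists B, A, D; split; [discriminate|split;[discriminate|split;[discriminate|unfold hat; split;lra]]]
  | exists B, Defs.C, D; split; [discriminate|split;[discriminate|split;[discriminate|unfold hat; split;lra]]]
  | exists Defs.C, A, B; split; [discriminate|split;[discriminate|split;[discriminate|unfold hat; split;lra]]]
  | exists Defs.C, A, D; split; [discriminate|split;[discriminate|split;[discriminate|unfold hat; split;lra]]]
  | exists Defs.C, B, D; split; [discriminate|split;[discriminate|split;[discriminate|unfold hat; split;lra]]]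
  | exists D, A, B; split; [discriminate|split;[discriminate|split;[discriminate|unfold hat; split;lra]]]
  | exists D, A, Defs.C; split; [discriminate|split;[discriminate|split;[discriminate|unfold hat; split;lra]]]
  | exists D, B, Defs.C; split; [discriminate|split;[discriminate|split;[discriminate|unfold hat; split;lra]]]
  | exfalso; lra ].
Qed.
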